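(* Assume $\mathcal M_1=\mathcal M_2=1$ and take $A_1=2\chi_{13}^2+\tfrac12(\chi_{12}-\chi_{13}-\chi_{23})^2$, $A_2=2\chi_{23}^2+\tfrac12(\chi_{12}-\chi_{13}-\chi_{23})^2$. Let $n\ge1$ and let $(\phi_1^k,\phi_2^k)\in\vec{\mathcal C}^{\mathcal G}_{\rm per}$, $k=n-1,n,n+1$, with $\overline{\phi_i^{n-1}}=\overline{\phi_i^{n}}=\overline{\phi_i^{n+1}}$ ($i=1,2$), where $(\phi_1^{n+1},\phi_2^{n+1})$ solves the BDF2 scheme at step $n+1$. Define, for $m\ge0$, $F_h^{m+1}=G_h(\phi_1^{m+1},\phi_2^{m+1})+\frac{3}{4\Delta t}\big(\|\phi_1^{m+1}-\phi_1^m\|_{-1,h}^2+\|\phi_2^{m+1}-\phi_2^m\|_{-1,h}^2\big)+\chi_{13}\|\phi_1^{m+1}-\phi_1^m\|_2^2+\chi_{23}\|\phi_2^{m+1}-\phi_2^m\|_2^2.$ Then $F_h^{n+1}\le F_h^{n}$.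
   Context: Discrete setting. Fix $L>0$, $N\in\mathbb N$, $h=L/N$, $\Omega=(0,L)^2$. $\mathcal C_{\rm per}$ is the space of real grid functions $\nu=(\nu_{i,j})_{i,j\in\mathbb Z}$ with $\nu_{i+aN,j+bN}=\nu_{i,j}$ for all integers $i,j,a,b$ ($\nu_{i,j}$ is the value at the cell centre $((i-\tfrac12)h,(j-\tfrac12)h)$); periodic face-centred functions are indexed by $(i+\frac12,j)$ (east-west faces) or $(i,j+\frac12)$ (north-south faces). Define $(A_x\nu)_{i+\frac12,j}=\tfrac12(\nu_{i+1,j}+\nu_{i,j})$, $(D_x\nu)_{i+\frac12,j}=\tfrac1h(\nu_{i+1,j}-\nu_{i,j})$, and for east-west face functions $f$, $(a_xf)_{i,j}=\tfrac12(f_{i+\frac12,j}+f_{i-\frac12,j})$, $(d_xf)_{i,j}=\tfrac1h(f_{i+\frac12,j}-f_{i-\frac12,j})$; $A_y,D_y,a_y,d_y$ are defined analogously in the second index. $\nabla_h\nu=(D_x\nu,D_y\nu)$, $\nabla_h\cdot(f^x,f^y)=d_xf^x+d_yf^y$, $\Delta_h\nu=d_x(D_x\nu)+d_y(D_y\nu)$ (the 5-point Laplacian). For $\nu,\xi\in\mathcal C_{\rm per}$: $\langle\nu,\xi\rangle=h^2\sum_{i,j=1}^N\nu_{i,j}\xi_{i,j}$, $\|\nu\|_2=\langle\nu,\nu\rangle^{1/2}$, $\|\nu\|_\infty=\max_{1\le i,j\le N}|\nu_{i,j}|$, $\|\nabla_h\nu\|_2^2=\langle a_x((D_x\nu)^2)+a_y((D_y\nu)^2),1\rangle$,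 $\overline{\nu}=|\Omega|^{-1}\langle\nu,1\rangle$. For $\overline\nu=0$, $(-\Delta_h)^{-1}\nu$ denotes the unique mean-zero $\psi\in\mathcal C_{\rm per}$ with $-\Delta_h\psi=\nu$; for mean-zero $\nu,\xi$, $\langle\nu,\xi\rangle_{-1,h}=\langle\nu,(-\Delta_h)^{-1}\xi\rangle$ and $\|\nu\|_{-1,h}=\langle\nu,\nu\rangle_{-1,h}^{1/2}$. Functions of grid functions (products, quotients, $\ln$) act pointwise. Model. $M_0,N_0>0$, $\alpha=\pi((M_0/\pi)^{1/2}+N_0/2)^2$, $\beta=2(M_0/\pi)^{1/2}+N_0$; $\varepsilon_1,\varepsilon_2,\varepsilon_3>0$; $\chi_{12},\chi_{13},\chi_{23}>0$ with $4\chi_{13}\chi_{23}-(\chi_{12}-\chi_{13}-\chi_{23})^2>0$; mobilities $\mathcal M_1,\mathcal M_2>0$. For $a,b>0$, $a+b<1$: $S(a,b)=\frac{a}{M_0}\ln\frac{\alpha a}{M_0}+\frac{b}{N_0}\ln\frac{\beta b}{N_0}+(1-a-b)\ln(1-a-b)$, $H(a,b)=\chi_{12}ab+\chi_{13}a(1-a-b)+\chi_{23}b(1-a-b)$; thus $\partial_aS=\frac1{M_0}\ln\frac{\alpha a}{M_0}+\frac1{M_0}-\ln(1-a-b)-1$, $\partial_bS=\frac1{N_0}\ln\frac{\beta b}{N_0}+\frac1{N_0}-\ln(1-a-b)-1$, $\partial_aH=\chi_{13}-2\chi_{13}a+(\chi_{12}-\chi_{13}-\chi_{23})b$, $\partial_bH=\chi_{23}-2\chi_{23}b+(\chi_{12}-\chi_{13}-\chi_{23})a$.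 $\kappa(s)=1/(36s)$. The Gibbs triangle is $\mathcal G=\{(a,b):a>0,b>0,a+b<1\}$, and $\vec{\mathcal C}^{\mathcal G}_{\rm per}$ is the set of pairs $(\phi_1,\phi_2)\in\mathcal C_{\rm per}^2$ with $((\phi_1)_{i,j},(\phi_2)_{i,j})\in\mathcal G$ for all $i,j$. For such a pair set $u_1=\phi_1$, $u_2=\phi_2$, $u_3=1-\phi_1-\phi_2$ and, for $k=1,2,3$, $T_k(\phi_1,\phi_2)=a_x(\kappa'(A_xu_k)(D_xu_k)^2)-2d_x(\kappa(A_xu_k)D_xu_k)+a_y(\kappa'(A_yu_k)(D_yu_k)^2)-2d_y(\kappa(A_yu_k)D_yu_k)$. Discrete energy: $G_h(\phi_1,\phi_2)=\langle S(\phi_1,\phi_2)+H(\phi_1,\phi_2),1\rangle+\sum_{k=1}^3\varepsilon_k^2\langle a_x(\kappa(A_xu_k)(D_xu_k)^2)+a_y(\kappa(A_yu_k)(D_yu_k)^2),1\rangle$. Convex-part derivatives: $\delta_{\phi_1}G_{h,c}(\phi_1,\phi_2)=\partial_aS(\phi_1,\phi_2)+\varepsilon_1^2T_1-\varepsilon_3^2T_3$, $\delta_{\phi_2}G_{h,c}(\phi_1,\phi_2)=\partial_bS(\phi_1,\phi_2)+\varepsilon_2^2T_2-\varepsilon_3^2T_3$. BDF2 scheme. Fix $\Delta t>0$ and constants $A_1,A_2\ge0$. For $n\ge1$, given $(\phi_1^{k},\phi_2^{k})$, $k=n-1,n$, set $\hat\phi_i^n=2\phi_i^n-\phi_i^{n-1}$.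 A pair $(\phi_1^{n+1},\phi_2^{n+1})\in\vec{\mathcal C}^{\mathcal G}_{\rm per}$ solves the scheme at step $n+1$ if for $i=1,2$: $\frac{3\phi_i^{n+1}-4\phi_i^n+\phi_i^{n-1}}{2\Delta t}=\mathcal M_i\Delta_h\mu_i^{n+1}$, where $\mu_1^{n+1}=\delta_{\phi_1}G_{h,c}(\phi_1^{n+1},\phi_2^{n+1})+\partial_aH(\hat\phi_1^n,\hat\phi_2^n)-A_1\Delta t\,\Delta_h(\phi_1^{n+1}-\phi_1^n)$ and $\mu_2^{n+1}=\delta_{\phi_2}G_{h,c}(\phi_1^{n+1},\phi_2^{n+1})+\partial_bH(\hat\phi_1^n,\hat\phi_2^n)-A_2\Delta t\,\Delta_h(\phi_2^{n+1}-\phi_2^n)$. *)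

(* Defs.v *)
From Stdlib Require Import Reals ZArith List ClassicalEpsilon.
Open Scope R_scope.

(* Cell-centred: f i j is the value at cell
   (i,j).  East-west face functions: g i j is the value at face (i+1/2, j).
   North-south face functions: g i j is the value at face (i, j+1/2). *)
Definition grid := Z -> Z -> R.

Definition periodic (N : nat) (f : grid) : Prop :=
  forall i j a b : Z,
    f (i + a * Z.of_nat N)%Z (j + b * Z.of_nat N)%Z = f i j.

Definition gplus (f g : grid) : grid := fun i j => f i j + g i j.
Definition gminus (f g : grid) : grid := fun i j => f i j - g i j.
Definition gconst (c : R) : grid := fun _ _ => c.

Definition Ax (f : grid) : grid := fun i j => (f (i + 1)%Z j + f i j) / 2.
Definition Ay (f : grid) : grid := fun i j => (f i (j + 1)%Z + f i j) / 2.
Definition Dx (h : R) (f : grid) : grid := fun i j => (f (i + 1)%Z j - f i j) / h.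
Definition Dy (h : R) (f : grid) : grid := fun i j => (f i (j + 1)%Z - f i j) / h.
(* on face functions: faces i+1/2 -> g i, i-1/2 -> g (i-1) *)
Definition ax (g : grid) : grid := fun i j => (g i j + g (i - 1)%Z j) / 2.
Definition ay (g : grid) : grid := fun i j => (g i j + g i (j - 1)%Z) / 2.
Definition dx (h : R) (g : grid) : grid := fun i j => (g i j - g (i - 1)%Z j) / h.
Definition dy (h : R) (g : grid) : grid := fun i j => (g i j - g i (j - 1)%Z) / h.

Definition lap (h : R) (f : grid) : grid :=
  fun i j => dx h (Dx h f) i j + dy h (Dy h f) i j.

Definition sum1N (N : nat) (F : Z -> R) : R :=
  fold_right Rplus 0 (map (fun k => F (Z.of_nat k + 1)%Z) (seq 0 N)).

Definition inner (h : R) (N : nat) (f g : grid) : R :=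
  h ^ 2 * sum1N N (fun i => sum1N N (fun j => f i j * g i j)).

Definition mean (L : R) (N : nat) (f : grid) : R :=
  inner (L / INR N) N f (gconst 1) / (L ^ 2).

(* (-Delta_h)^{-1} nu: the (unique, for mean-zero nu) periodic mean-zero psi
   with -Delta_h psi = nu; chosen by Hilbert's epsilon. *)
Definition inv_neg_lap (L : R) (N : nat) (nu : grid) : grid :=
  epsilon (inhabits (gconst 0))
    (fun psi => periodic N psi /\ mean L N psi = 0 /\
                forall i j, - lap (L / INR N) psi i j = nu i j).

Definition neg1_sq (L : R) (N : nat) (nu : grid) : R :=
  inner (L / INR N) N nu (inv_neg_lap L N nu).

Definition l2_sq (L : R) (N : nat) (nu : grid) : R :=
  inner (L / INR N) N nu nu.

Definition alpha (M0 N0 : R) : R := PI * (sqrt (M0 / PI) + N0 / 2) ^ 2.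
Definition beta (M0 N0 : R) : R := 2 * sqrt (M0 / PI) + N0.

Definition S (M0 N0 a b : R) : R :=
  a / M0 * ln (alpha M0 N0 * a / M0) + b / N0 * ln (beta M0 N0 * b / N0)
  + (1 - a - b) * ln (1 - a - b).
Definition Hf (c12 c13 c23 a b : R) : R :=
  c12 * a * b + c13 * a * (1 - a - b) + c23 * b * (1 - a - b).

Definition dS_a (M0 N0 a b : R) : R :=
  1 / M0 * ln (alpha M0 N0 * a / M0) + 1 / M0 - ln (1 - a - b) - 1.
Definition dS_b (M0 N0 a b : R) : R :=
  1 / N0 * ln (beta M0 N0 * b / N0) + 1 / N0 - ln (1 - a - b) - 1.
Definition dH_a (c12 c13 c23 a b : R) : R :=
  c13 - 2 * c13 * a + (c12 - c13 - c23) * b.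
Definition dH_b (c12 c13 c23 a b : R) : R :=
  c23 - 2 * c23 * b + (c12 - c13 - c23) * a.

Definition kappa (s : R) : R := 1 / (36 * s).
Definition kappa' (s : R) : R := - 1 / (36 * s ^ 2).

Definition Tk (h : R) (u : grid) : grid := fun i j =>
  ax (fun p q => kappa' (Ax u p q) * (Dx h u p q) ^ 2) i j
  - 2 * dx h (fun p q => kappa (Ax u p q) * Dx h u p q) i j
  + ay (fun p q => kappa' (Ay u p q) * (Dy h u p q) ^ 2) i j
  - 2 * dy h (fun p q => kappa (Ay u p q) * Dy h u p q) i j.

Definition u3 (p1 p2 : grid) : grid := fun i j => 1 - p1 i j - p2 i j.

Definition grad_dens (h : R) (u : grid) : grid := fun i j =>
  ax (fun p q => kappa (Ax u p q) * (Dx h u p q) ^ 2) i j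
  + ay (fun p q => kappa (Ay u p q) * (Dy h u p q) ^ 2) i j.

Definition Gh (L : R) (N : nat) (M0 N0 e1 e2 e3 c12 c13 c23 : R)
  (p1 p2 : grid) : R :=
  let h := L / INR N in
  inner h N (fun i j => S M0 N0 (p1 i j) (p2 i j) + Hf c12 c13 c23 (p1 i j) (p2 i j))
        (gconst 1)
  + e1 ^ 2 * inner h N (grad_dens h p1) (gconst 1)
  + e2 ^ 2 * inner h N (grad_dens h p2) (gconst 1)
  + e3 ^ 2 * inner h N (grad_dens h (u3 p1 p2)) (gconst 1).

Definition in_gibbs (N : nat) (p1 p2 : grid) : Prop :=
  periodic N p1 /\ periodic N p2 /\
  forall i j, 0 < p1 i j /\ 0 < p2 i j /\ p1 i j + p2 i j < 1.

Definition mu1 (L : R) (N : nat) (M0 N0 e1 e2 e3 c12 c13 c23 dt A1 : R)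
  (q1m q2m q1 q2 p1 p2 : grid) : grid :=
  let h := L / INR N in fun i j =>
  dS_a M0 N0 (p1 i j) (p2 i j) + e1 ^ 2 * Tk h p1 i j - e3 ^ 2 * Tk h (u3 p1 p2) i j
  + dH_a c12 c13 c23 (2 * q1 i j - q1m i j) (2 * q2 i j - q2m i j)
  - A1 * dt * lap h (gminus p1 q1) i j.
Definition mu2 (L : R) (N : nat) (M0 N0 e1 e2 e3 c12 c13 c23 dt A2 : R)
  (q1m q2m q1 q2 p1 p2 : grid) : grid :=
  let h := L / INR N in fun i j =>
  dS_b M0 N0 (p1 i j) (p2 i j) + e2 ^ 2 * Tk h p2 i j - e3 ^ 2 * Tk h (u3 p1 p2) i j
  + dH_b c12 c13 c23 (2 * q1 i j - q1m i j) (2 * q2 i j - q2m i j)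
  - A2 * dt * lap h (gminus p2 q2) i j.

(* (p1,p2) = phi^{n+1} solves the BDF2 scheme given (q1m,q2m) = phi^{n-1},
   (q1,q2) = phi^n *)
Definition solves_bdf2 (L : R) (N : nat) (M0 N0 e1 e2 e3 c12 c13 c23 Mob1 Mob2 dt A1 A2 : R)
  (q1m q2m q1 q2 p1 p2 : grid) : Prop :=
  in_gibbs N p1 p2 /\
  (forall i j, (3 * p1 i j - 4 * q1 i j + q1m i j) / (2 * dt)
     = Mob1 * lap (L / INR N) (mu1 L N M0 N0 e1 e2 e3 c12 c13 c23 dt A1 q1m q2m q1 q2 p1 p2) i j) /\
  (forall i j, (3 * p2 i j - 4 * q2 i j + q2m i j) / (2 * dt)
     = Mob2 * lap (L / INR N) (mu2 L N M0 N0 e1 e2 e3 c12 c13 c23 dt A2 q1m q2m q1 q2 p1 p2) i j).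

(* F_h^{m+1}, given (p1,p2) = phi^{m+1} and (q1,q2) = phi^m *)
Definition Fh (L : R) (N : nat) (M0 N0 e1 e2 e3 c12 c13 c23 dt : R)
  (q1 q2 p1 p2 : grid) : R :=
  Gh L N M0 N0 e1 e2 e3 c12 c13 c23 p1 p2
  + 3 / (4 * dt) * (neg1_sq L N (gminus p1 q1) + neg1_sq L N (gminus p2 q2))
  + c13 * l2_sq L N (gminus p1 q1) + c23 * l2_sq L N (gminus p2 q2).

(* Main.v *)
Require Import Defs.
From Stdlib Require Import Reals ZArith List ClassicalEpsilon.
Open Scope R_scope.
From Stdlib Require Import Lra Lia Psatz FunctionalExtensionality.
Import Defs.

Lemma sum1N_S n F : sum1N (Datatypes.S n) F = sum1N n F + F (Z.of_nat n + 1)%Z.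
Proof.
  unfold sum1N. rewrite seq_S, map_app, fold_right_app. simpl.
  generalize (map (fun k : nat => F (Z.of_nat k + 1)%Z) (seq 0 n)).
  intro l; induction l; simpl; lra.
Qed.

Lemma sum1N_0 F : sum1N 0 F = 0.
Proof. reflexivity. Qed.

Lemma sum1N_ext n F G : (forall k, F k = G k) -> sum1N n F = sum1N n G.
Proof. intro H; induction n; [reflexivity|rewrite !sum1N_S, IHn, H; reflexivity]. Qed.

Lemma sum1N_ext_in n F G : (forall k, (1 <= k <= Z.of_nat n)%Z -> F k = G k) -> sum1N n F = sum1N n G.
Proof. induction n; intro H; [reflexivity|]. rewrite !sum1N_S, IHn, H; [reflexivity|lia|].
  intros k Hk; apply H; lia. Qed.

Lemma sum1N_plus n F G : sum1N n (fun k => F k + G k) = sum1N n F + sum1N n G.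
Proof. induction n; [unfold sum1N; simpl; lra|rewrite !sum1N_S, IHn; lra]. Qed.

Lemma sum1N_scal n c F : sum1N n (fun k => c * F k) = c * sum1N n F.
Proof. induction n; [unfold sum1N; simpl; lra|rewrite !sum1N_S, IHn; lra]. Qed.

Lemma sum1N_const n c : sum1N n (fun _ => c) = INR n * c.
Proof. induction n; [unfold sum1N; simpl; lra|rewrite !sum1N_S, IHn, S_INR; lra]. Qed.

Lemma sum1N_le n F G : (forall k, F k <= G k) -> sum1N n F <= sum1N n G.
Proof. intro H; induction n; [unfold sum1N; simpl; lra|rewrite !sum1N_S; specialize (H (Z.of_nat n + 1)%Z); lra]. Qed.

Lemma sum1N_nonneg_zero n F : (forall k, 0 <= F k) -> sum1N n F = 0 ->
  forall k, (1 <= k <= Z.of_nat n)%Z -> F k = 0.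
Proof.
  intros H; induction n; intros Hs k Hk; [lia|].
  rewrite sum1N_S in Hs.
  assert (0 <= sum1N n F).
  { replace 0 with (sum1N n (fun _ => 0)) by (rewrite sum1N_const; lra); apply sum1N_le; auto. }
  pose proof (H (Z.of_nat n + 1)%Z).
  destruct (Z.eq_dec k (Z.of_nat n + 1)) as [->|]; [lra|]. apply IHn; [lra|lia].
Qed.

Lemma sum1N_shiftm n F : sum1N n (fun k => F (k - 1)%Z) = sum1N n F - F (Z.of_nat n) + F 0%Z.
Proof.
  induction n; [unfold sum1N; simpl; lra|]. rewrite !sum1N_S, IHn.
  replace (Z.of_nat n + 1 - 1)%Z with (Z.of_nat n) by lia.
  rewrite Nat2Z.inj_succ. unfold Z.succ. lra.
Qed.

Definition sum2 n (F : grid) := sum1N n (fun i => sum1N n (fun j => F i j)).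
Definition perx N (f : grid) := forall i j, f (i + Z.of_nat N)%Z j = f i j.
Definition pery N (f : grid) := forall i j, f i (j + Z.of_nat N)%Z = f i j.

Lemma sum2_ext n F G : (forall i j, F i j = G i j) -> sum2 n F = sum2 n G.
Proof. intro H; unfold sum2; apply sum1N_ext; intro; apply sum1N_ext; auto. Qed.
Lemma sum2_plus n F G : sum2 n (fun i j => F i j + G i j) = sum2 n F + sum2 n G.
Proof. unfold sum2. rewrite <- sum1N_plus. apply sum1N_ext; intro; apply sum1N_plus. Qed.
Lemma sum2_scal n c F : sum2 n (fun i j => c * F i j) = c * sum2 n F.
Proof. unfold sum2. rewrite <- sum1N_scal. apply sum1N_ext; intro; apply sum1N_scal. Qed.
Lemma sum2_le n F G : (forall i j, F i j <= G i j) -> sum2 n F <= sum2 n G.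
Proof. intro H; unfold sum2; apply sum1N_le; intro; apply sum1N_le; auto. Qed.

Lemma sum2_shiftx N F : perx N F -> sum2 N (fun i j => F (i - 1)%Z j) = sum2 N F.
Proof.
  intro P; unfold sum2. rewrite (sum1N_shiftm N (fun i => sum1N N (fun j => F i j))).
  rewrite (sum1N_ext N (fun j => F (Z.of_nat N) j) (fun j => F 0%Z j)); [lra|].
  intro k; rewrite <- (P 0%Z k); reflexivity.
Qed.
Lemma sum2_shifty N F : pery N F -> sum2 N (fun i j => F i (j - 1)%Z) = sum2 N F.
Proof.
  intro P; unfold sum2. apply sum1N_ext; intro i.
  rewrite (sum1N_shiftm N (fun j => F i j)). rewrite <- (P i 0%Z). simpl. lra.
Qed.
Lemma kappa_conv s s' p p' : 0 < s -> 0 < s' ->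
  kappa s * p ^ 2 - kappa s' * p' ^ 2 <= kappa' s * p ^ 2 * (s - s') + 2 * (kappa s * p) * (p - p').
Proof.
  intros Hs Hs'. unfold kappa, kappa'.
  assert (E: kappa' s * p ^ 2 * (s - s') + 2 * (kappa s * p) * (p - p') - (kappa s * p ^ 2 - kappa s' * p' ^ 2)
     = (p' * s - p * s') ^ 2 / (36 * s' * s ^ 2)) by (unfold kappa, kappa'; field; lra).
  unfold kappa, kappa' in E.
  assert (0 <= (p' * s - p * s') ^ 2 / (36 * s' * s ^ 2)).
  { apply Rle_mult_inv_pos. apply pow2_ge_0. apply Rmult_lt_0_compat; [lra|]. apply pow_lt; lra. }
  lra.
Qed.

Lemma perx_p1 N f : perx N f -> forall i j, f (i + Z.of_nat N + 1)%Z j = f (i + 1)%Z j.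
Proof. intros P i j; rewrite <- (P (i+1)%Z j); f_equal; ring. Qed.
Lemma perx_m1 N f : perx N f -> forall i j, f (i + Z.of_nat N - 1)%Z j = f (i - 1)%Z j.
Proof. intros P i j; rewrite <- (P (i-1)%Z j); f_equal; ring. Qed.
Lemma pery_p1 N f : pery N f -> forall i j, f i (j + Z.of_nat N + 1)%Z = f i (j + 1)%Z.
Proof. intros P i j; rewrite <- (P i (j+1)%Z); f_equal; ring. Qed.
Lemma pery_m1 N f : pery N f -> forall i j, f i (j + Z.of_nat N - 1)%Z = f i (j - 1)%Z.
Proof. intros P i j; rewrite <- (P i (j-1)%Z); f_equal; ring. Qed.

Ltac perx_tac P := intros ?i ?j; repeat first [rewrite (perx_p1 _ _ P) | rewrite (perx_m1 _ _ P) | rewrite (P _ _)]; reflexivity.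
Ltac pery_tac P := intros ?i ?j; repeat first [rewrite (pery_p1 _ _ P) | rewrite (pery_m1 _ _ P) | rewrite (P _ _)]; reflexivity.

Section Ops.
Variable N : nat.
Variable h : R.
Lemma perx_Ax f : perx N f -> perx N (Ax f). Proof. intro P; unfold Ax; perx_tac P. Qed.
Lemma perx_Ay f : perx N f -> perx N (Ay f). Proof. intro P; unfold Ay; perx_tac P. Qed.
Lemma perx_Dx f : perx N f -> perx N (Dx h f). Proof. intro P; unfold Dx; perx_tac P. Qed.
Lemma perx_Dy f : perx N f -> perx N (Dy h f). Proof. intro P; unfold Dy; perx_tac P. Qed.
Lemma perx_ax f : perx N f -> perx N (ax f). Proof. intro P; unfold ax; perx_tac P. Qed.
Lemma perx_ay f : perx N f -> perx N (ay f). Proof. intro P; unfold ay; perx_tac P. Qed.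
Lemma perx_dx f : perx N f -> perx N (dx h f). Proof. intro P; unfold dx; perx_tac P. Qed.
Lemma perx_dy f : perx N f -> perx N (dy h f). Proof. intro P; unfold dy; perx_tac P. Qed.
Lemma pery_Ax f : pery N f -> pery N (Ax f). Proof. intro P; unfold Ax; pery_tac P. Qed.
Lemma pery_Ay f : pery N f -> pery N (Ay f). Proof. intro P; unfold Ay; pery_tac P. Qed.
Lemma pery_Dx f : pery N f -> pery N (Dx h f). Proof. intro P; unfold Dx; pery_tac P. Qed.
Lemma pery_Dy f : pery N f -> pery N (Dy h f). Proof. intro P; unfold Dy; pery_tac P. Qed.
Lemma pery_ax f : pery N f -> pery N (ax f). Proof. intro P; unfold ax; pery_tac P. Qed.
Lemma pery_ay f : pery N f -> pery N (ay f). Proof. intro P; unfold ay; pery_tac P. Qed.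
Lemma pery_dx f : pery N f -> pery N (dx h f). Proof. intro P; unfold dx; pery_tac P. Qed.
Lemma pery_dy f : pery N f -> pery N (dy h f). Proof. intro P; unfold dy; pery_tac P. Qed.
Lemma perx_lap f : perx N f -> perx N (lap h f).
Proof. intros P i j; unfold lap. rewrite (perx_dx _ (perx_Dx _ P)), (perx_dy _ (perx_Dy _ P)). reflexivity. Qed.
Lemma pery_lap f : pery N f -> pery N (lap h f).
Proof. intros P i j; unfold lap. rewrite (pery_dx _ (pery_Dx _ P)), (pery_dy _ (pery_Dy _ P)). reflexivity. Qed.
End Ops.

Section ByParts.
Variable N : nat.
Variable h : R.
Hypothesis Hh : h <> 0.

Lemma byparts_dx F g : perx N F -> perx N g ->
  sum2 N (fun i j => dx h F i j * g i j) = - sum2 N (fun i j => F i j * Dx h g i j).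
Proof.
  intros PF Pg.
  set (G := fun i j => F i j * g (i + 1)%Z j).
  assert (PG : perx N G) by (intros i j; unfold G; rewrite PF, (perx_p1 _ _ Pg); reflexivity).
  rewrite (sum2_ext N _ (fun i j => (1/h) * (F i j * g i j) + (-(1/h)) * G (i - 1)%Z j)).
  2:{ intros i j; unfold dx, G. replace (i - 1 + 1)%Z with i by ring. field. auto. }
  rewrite sum2_plus, !sum2_scal, (sum2_shiftx N G PG).
  rewrite (sum2_ext N (fun i j => F i j * Dx h g i j) (fun i j => (1/h) * G i j + (-(1/h)) * (F i j * g i j))).
  2:{ intros i j; unfold Dx, G. field. auto. }
  rewrite sum2_plus, !sum2_scal. ring.
Qed.

Lemma byparts_ax F g : perx N F -> perx N g ->
  sum2 N (fun i j => ax F i j * g i j) = sum2 N (fun i j => F i j * Ax g i j).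
Proof.
  intros PF Pg.
  set (G := fun i j => F i j * g (i + 1)%Z j).
  assert (PG : perx N G) by (intros i j; unfold G; rewrite PF, (perx_p1 _ _ Pg); reflexivity).
  rewrite (sum2_ext N _ (fun i j => (1/2) * (F i j * g i j) + (1/2) * G (i - 1)%Z j)).
  2:{ intros i j; unfold ax, G. replace (i - 1 + 1)%Z with i by ring. field. }
  rewrite sum2_plus, !sum2_scal, (sum2_shiftx N G PG).
  rewrite (sum2_ext N (fun i j => F i j * Ax g i j) (fun i j => (1/2) * G i j + (1/2) * (F i j * g i j))).
  2:{ intros i j; unfold Ax, G. field. }
  rewrite sum2_plus, !sum2_scal. ring.
Qed.

Lemma byparts_dy F g : pery N F -> pery N g ->
  sum2 N (fun i j => dy h F i j * g i j) = - sum2 N (fun i j => F i j * Dy h g i j).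
Proof.
  intros PF Pg.
  set (G := fun i j => F i j * g i (j + 1)%Z).
  assert (PG : pery N G) by (intros i j; unfold G; rewrite PF, (pery_p1 _ _ Pg); reflexivity).
  rewrite (sum2_ext N _ (fun i j => (1/h) * (F i j * g i j) + (-(1/h)) * G i (j - 1)%Z)).
  2:{ intros i j; unfold dy, G. replace (j - 1 + 1)%Z with j by ring. field. auto. }
  rewrite sum2_plus, !sum2_scal, (sum2_shifty N G PG).
  rewrite (sum2_ext N (fun i j => F i j * Dy h g i j) (fun i j => (1/h) * G i j + (-(1/h)) * (F i j * g i j))).
  2:{ intros i j; unfold Dy, G. field. auto. }
  rewrite sum2_plus, !sum2_scal. ring.
Qed.

Lemma byparts_ay F g : pery N F -> pery N g ->
  sum2 N (fun i j => ay F i j * g i j) = sum2 N (fun i j => F i j * Ay g i j).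
Proof.
  intros PF Pg.
  set (G := fun i j => F i j * g i (j + 1)%Z).
  assert (PG : pery N G) by (intros i j; unfold G; rewrite PF, (pery_p1 _ _ Pg); reflexivity).
  rewrite (sum2_ext N _ (fun i j => (1/2) * (F i j * g i j) + (1/2) * G i (j - 1)%Z)).
  2:{ intros i j; unfold ay, G. replace (j - 1 + 1)%Z with j by ring. field. }
  rewrite sum2_plus, !sum2_scal, (sum2_shifty N G PG).
  rewrite (sum2_ext N (fun i j => F i j * Ay g i j) (fun i j => (1/2) * G i j + (1/2) * (F i j * g i j))).
  2:{ intros i j; unfold Ay, G. field. }
  rewrite sum2_plus, !sum2_scal. ring.
Qed.
End ByParts.

Definition per2 N f := perx N f /\ pery N f.
Definition Bf h N f g := sum2 N (fun i j => - lap h f i j * g i j).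

Section BfS.
Variable N : nat.
Variable h : R.
Hypothesis Hh : h <> 0.

Lemma Bf_grad f g : per2 N f -> per2 N g ->
  Bf h N f g = sum2 N (fun i j => Dx h f i j * Dx h g i j + Dy h f i j * Dy h g i j).
Proof.
  intros [Pfx Pfy] [Pgx Pgy]. unfold Bf.
  rewrite (sum2_ext N _ (fun i j => (-1) * (dx h (Dx h f) i j * g i j) + (-1) * (dy h (Dy h f) i j * g i j))).
  2:{ intros i j; unfold lap; ring. }
  rewrite sum2_plus, !sum2_scal, byparts_dx, byparts_dy, sum2_plus; auto.
  - ring.
  - apply pery_Dy; auto.
  - apply perx_Dx; auto.
Qed.

Lemma Bf_sym f g : per2 N f -> per2 N g -> Bf h N f g = Bf h N g f.
Proof. intros Pf Pg; rewrite !Bf_grad; auto. apply sum2_ext; intros; ring. Qed.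

Lemma Bf_atom x y t a : per2 N x -> per2 N y -> 0 < t ->
  2 * a * Bf h N x y <= t * Bf h N x x + a ^ 2 / t * Bf h N y y.
Proof.
  intros Px Py Ht. rewrite !Bf_grad; auto.
  rewrite <- !sum2_scal, <- sum2_plus. apply sum2_le. intros i j.
  set (p := Dx h x i j); set (q := Dx h y i j); set (r := Dy h x i j); set (s := Dy h y i j).
  assert (E : t * (p * p + r * r) + a ^ 2 / t * (q * q + s * s) - 2 * a * (p * q + r * s)
     = ((t * p - a * q) ^ 2 + (t * r - a * s) ^ 2) / t) by (field; lra).
  assert (0 <= ((t * p - a * q) ^ 2 + (t * r - a * s) ^ 2) / t).
  { apply Rle_mult_inv_pos; [|lra]. pose proof (pow2_ge_0 (t*p - a*q)); pose proof (pow2_ge_0 (t*r-a*s)); lra. }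
  lra.
Qed.

Lemma Bf_nonneg f : per2 N f -> 0 <= Bf h N f f.
Proof.
  intro P; rewrite Bf_grad; auto.
  replace 0 with (sum2 N (fun _ _ => 0)).
  - apply sum2_le; intros; nra.
  - unfold sum2. rewrite (sum1N_ext N _ (fun _ => 0)). rewrite sum1N_const; ring.
    intro; rewrite sum1N_const; ring.
Qed.
End BfS.

Lemma sum2_minus N F G : sum2 N (fun i j => F i j - G i j) = sum2 N F - sum2 N G.
Proof.
  rewrite (sum2_ext N _ (fun i j => F i j + (-1) * G i j)) by (intros; ring).
  rewrite sum2_plus, sum2_scal; ring.
Qed.

Section Grad.
Variable N : nat.
Variable h : R.
Hypothesis Hh : h <> 0.

Definition Fxw (w : grid) : grid := fun p q => kappa (Ax w p q) * (Dx h w p q) ^ 2.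
Definition Fyw (w : grid) : grid := fun p q => kappa (Ay w p q) * (Dy h w p q) ^ 2.
Definition Kx' (w : grid) : grid := fun p q => kappa' (Ax w p q) * (Dx h w p q) ^ 2.
Definition Ky' (w : grid) : grid := fun p q => kappa' (Ay w p q) * (Dy h w p q) ^ 2.
Definition Kx (w : grid) : grid := fun p q => kappa (Ax w p q) * Dx h w p q.
Definition Ky (w : grid) : grid := fun p q => kappa (Ay w p q) * Dy h w p q.

Ltac perF P := intros ?i ?j; unfold Fxw, Fyw, Kx', Ky', Kx, Ky;
  first [ rewrite (perx_Ax N _ P), (perx_Dx N h _ P) | rewrite (perx_Ay N _ P), (perx_Dy N h _ P)
        | rewrite (pery_Ax N _ P), (pery_Dx N h _ P) | rewrite (pery_Ay N _ P), (pery_Dy N h _ P)]; reflexivity.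

Lemma gconst_per c : per2 N (gconst c).
Proof. split; intros i j; reflexivity. Qed.

Lemma E_grad w : per2 N w ->
  sum2 N (fun i j => grad_dens h w i j * gconst 1 i j) = sum2 N (fun i j => Fxw w i j + Fyw w i j).
Proof.
  intros [Px Py].
  rewrite (sum2_ext N _ (fun i j => ax (Fxw w) i j * gconst 1 i j + ay (Fyw w) i j * gconst 1 i j)).
  2:{ intros; unfold grad_dens, Fxw, Fyw; ring. }
  rewrite sum2_plus, byparts_ax, byparts_ay, <- sum2_plus.
  - apply sum2_ext; intros; unfold Ax, Ay, gconst; field.
  - perF Py.
  - apply gconst_per.
  - perF Px.
  - apply gconst_per.
Qed.

Lemma E_Tk u w : per2 N u -> per2 N w ->
  sum2 N (fun i j => Tk h u i j * w i j) =
  sum2 N (fun i j => Kx' u i j * Ax w i j + 2 * (Kx u i j * Dx h w i j)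
                    + (Ky' u i j * Ay w i j + 2 * (Ky u i j * Dy h w i j))).
Proof.
  intros [Px Py] [Pwx Pwy].
  rewrite (sum2_ext N _ (fun i j => (ax (Kx' u) i j * w i j + (-2) * (dx h (Kx u) i j * w i j))
       + (ay (Ky' u) i j * w i j + (-2) * (dy h (Ky u) i j * w i j)))).
  2:{ intros; unfold Tk, Kx', Ky', Kx, Ky; ring. }
  rewrite !sum2_plus, !sum2_scal, byparts_ax, byparts_ay, byparts_dx, byparts_dy; auto; try (perF Px); try (perF Py).
  ring.
Qed.

Lemma grad_ineq u v : per2 N u -> per2 N v -> (forall i j, 0 < u i j) -> (forall i j, 0 < v i j) ->
  sum2 N (fun i j => grad_dens h u i j * gconst 1 i j) - sum2 N (fun i j => grad_dens h v i j * gconst 1 i j)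
  <= sum2 N (fun i j => Tk h u i j * gminus u v i j).
Proof.
  intros Pu Pv Hu Hv.
  assert (Pw : per2 N (gminus u v)).
  { destruct Pu as [ux uy]; destruct Pv as [vx vy]; split; intros i j; unfold gminus;
    [rewrite ux, vx | rewrite uy, vy]; reflexivity. }
  rewrite !E_grad, E_Tk, <- sum2_minus; auto.
  apply sum2_le; intros i j.
  assert (Hax : Ax (gminus u v) i j = Ax u i j - Ax v i j) by (unfold Ax, gminus; field).
  assert (Hay : Ay (gminus u v) i j = Ay u i j - Ay v i j) by (unfold Ay, gminus; field).
  assert (Hdx : Dx h (gminus u v) i j = Dx h u i j - Dx h v i j) by (unfold Dx, gminus; field; auto).
  assert (Hdy : Dy h (gminus u v) i j = Dy h u i j - Dy h v i j) by (unfold Dy, gminus; field; auto).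
  rewrite Hax, Hay, Hdx, Hdy.
  assert (Pax : forall w, (forall i j, 0 < w i j) -> 0 < Ax w i j) by (intros w Hw; unfold Ax; pose proof (Hw (i+1)%Z j); pose proof (Hw i j); lra).
  assert (Pay : forall w, (forall i j, 0 < w i j) -> 0 < Ay w i j) by (intros w Hw; unfold Ay; pose proof (Hw i (j+1)%Z); pose proof (Hw i j); lra).
  pose proof (kappa_conv _ _ (Dx h u i j) (Dx h v i j) (Pax u Hu) (Pax v Hv)).
  pose proof (kappa_conv _ _ (Dy h u i j) (Dy h v i j) (Pay u Hu) (Pay v Hv)).
  unfold Fxw, Fyw, Kx', Ky', Kx, Ky. lra.
Qed.
End Grad.

Lemma ln_le_sub1 z : 0 < z -> ln z <= z - 1.
Proof. intro Hz. pose proof (exp_ineq1_le (ln z)). rewrite exp_ln in H; lra. Qed.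

Lemma xlnx_conv x y C : 0 < x -> 0 < y ->
  x * (ln x + C) - y * (ln y + C) <= (ln x + C + 1) * (x - y).
Proof.
  intros Hx Hy.
  assert (E : ln x - ln y = ln (x / y)).
  { unfold Rdiv. rewrite ln_mult, ln_Rinv; [ring|lra|lra|apply Rinv_0_lt_compat; lra]. }
  pose proof (ln_le_sub1 (x / y)) as Hl.
  assert (0 < x / y) by (apply Rdiv_lt_0_compat; lra).
  specialize (Hl H).
  assert (y * (ln x - ln y) <= x - y).
  { rewrite E. replace (x - y) with (y * (x / y - 1)) by (field; lra). apply Rmult_le_compat_l; lra. }
  nra.
Qed.

Lemma ln_scale k x d : 0 < k -> 0 < x -> 0 < d -> ln (k * x / d) = ln x + (ln k - ln d).
Proof.
  intros. unfold Rdiv. rewrite !ln_mult, ln_Rinv; try lra; try (apply Rinv_0_lt_compat; lra);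
   try (apply Rmult_lt_0_compat; lra).
Qed.

Lemma alpha_pos M0 N0 : 0 < M0 -> 0 < N0 -> 0 < alpha M0 N0.
Proof.
  intros. unfold alpha. apply Rmult_lt_0_compat; [apply PI_RGT_0|].
  pose proof (sqrt_pos (M0 / PI)). apply pow_lt; lra.
Qed.
Lemma beta_pos M0 N0 : 0 < M0 -> 0 < N0 -> 0 < beta M0 N0.
Proof. intros. unfold beta. pose proof (sqrt_pos (M0 / PI)). lra. Qed.

Lemma SH_pt M0 N0 c12 c13 c23 P1 P2 B1 B2 Q1 Q2 :
  0 < M0 -> 0 < N0 ->
  0 < P1 -> 0 < P2 -> P1 + P2 < 1 -> 0 < B1 -> 0 < B2 -> B1 + B2 < 1 ->
  S M0 N0 P1 P2 + Hf c12 c13 c23 P1 P2 - (S M0 N0 B1 B2 + Hf c12 c13 c23 B1 B2)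
  <= (dS_a M0 N0 P1 P2 + dH_a c12 c13 c23 (2 * B1 - Q1) (2 * B2 - Q2)) * (P1 - B1)
   + (dS_b M0 N0 P1 P2 + dH_b c12 c13 c23 (2 * B1 - Q1) (2 * B2 - Q2)) * (P2 - B2)
   + (2 * c13 * (B1 - Q1) * (P1 - B1) - (c12 - c13 - c23) * (B2 - Q2) * (P1 - B1)
      + 2 * c23 * (B2 - Q2) * (P2 - B2) - (c12 - c13 - c23) * (B1 - Q1) * (P2 - B2)
      - c13 * (P1 - B1) ^ 2 - c23 * (P2 - B2) ^ 2 + (c12 - c13 - c23) * (P1 - B1) * (P2 - B2)).
Proof.
  intros HM HN0 HP1 HP2 HP HB1 HB2 HB.
  pose proof (alpha_pos M0 N0 HM HN0). pose proof (beta_pos M0 N0 HM HN0).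
  assert (EH : Hf c12 c13 c23 P1 P2 - Hf c12 c13 c23 B1 B2
     = dH_a c12 c13 c23 (2 * B1 - Q1) (2 * B2 - Q2) * (P1 - B1)
     + dH_b c12 c13 c23 (2 * B1 - Q1) (2 * B2 - Q2) * (P2 - B2)
     + (2 * c13 * (B1 - Q1) * (P1 - B1) - (c12 - c13 - c23) * (B2 - Q2) * (P1 - B1)
      + 2 * c23 * (B2 - Q2) * (P2 - B2) - (c12 - c13 - c23) * (B1 - Q1) * (P2 - B2)
      - c13 * (P1 - B1) ^ 2 - c23 * (P2 - B2) ^ 2 + (c12 - c13 - c23) * (P1 - B1) * (P2 - B2)))
    by (unfold Hf, dH_a, dH_b; ring).
  assert (ES : S M0 N0 P1 P2 - S M0 N0 B1 B2 <= dS_a M0 N0 P1 P2 * (P1 - B1) + dS_b M0 N0 P1 P2 * (P2 - B2)).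
  { unfold S, dS_a, dS_b.
    rewrite !(ln_scale (alpha M0 N0)), !(ln_scale (beta M0 N0)); try lra.
    pose proof (xlnx_conv P1 B1 (ln (alpha M0 N0) - ln M0) HP1 HB1).
    pose proof (xlnx_conv P2 B2 (ln (beta M0 N0) - ln N0) HP2 HB2).
    pose proof (xlnx_conv (1 - P1 - P2) (1 - B1 - B2) 0 ltac:(lra) ltac:(lra)).
    rewrite !Rplus_0_r in H3.
    assert (A1 : P1 / M0 * (ln P1 + (ln (alpha M0 N0) - ln M0)) - B1 / M0 * (ln B1 + (ln (alpha M0 N0) - ln M0))
      <= 1 / M0 * ((ln P1 + (ln (alpha M0 N0) - ln M0) + 1) * (P1 - B1))).
    { replace (P1 / M0 * (ln P1 + (ln (alpha M0 N0) - ln M0)) - B1 / M0 * (ln B1 + (ln (alpha M0 N0) - ln M0)))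
        with (1 / M0 * (P1 * (ln P1 + (ln (alpha M0 N0) - ln M0)) - B1 * (ln B1 + (ln (alpha M0 N0) - ln M0)))) by (field; lra).
      apply Rmult_le_compat_l; [apply Rlt_le, Rdiv_lt_0_compat; lra | lra]. }
    assert (A2 : P2 / N0 * (ln P2 + (ln (beta M0 N0) - ln N0)) - B2 / N0 * (ln B2 + (ln (beta M0 N0) - ln N0))
      <= 1 / N0 * ((ln P2 + (ln (beta M0 N0) - ln N0) + 1) * (P2 - B2))).
    { replace (P2 / N0 * (ln P2 + (ln (beta M0 N0) - ln N0)) - B2 / N0 * (ln B2 + (ln (beta M0 N0) - ln N0)))
        with (1 / N0 * (P2 * (ln P2 + (ln (beta M0 N0) - ln N0)) - B2 * (ln B2 + (ln (beta M0 N0) - ln N0)))) by (field; lra).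
      apply Rmult_le_compat_l; [apply Rlt_le, Rdiv_lt_0_compat; lra | lra]. }
    replace (1 - P1 - P2 - (1 - B1 - B2)) with (- (P1 - B1) - (P2 - B2)) in H3 by ring.
    assert (Eq : 1 / M0 * ((ln P1 + (ln (alpha M0 N0) - ln M0) + 1) * (P1 - B1))
      = (1 / M0 * (ln P1 + (ln (alpha M0 N0) - ln M0)) + 1 / M0) * (P1 - B1)) by (field; lra).
    assert (Eq2 : 1 / N0 * ((ln P2 + (ln (beta M0 N0) - ln N0) + 1) * (P2 - B2))
      = (1 / N0 * (ln P2 + (ln (beta M0 N0) - ln N0)) + 1 / N0) * (P2 - B2)) by (field; lra).
    nra. }
  lra.
Qed.

Lemma perx_int N f : perx N f -> forall a i j, f (i + a * Z.of_nat N)%Z j = f i j.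
Proof.
  intros P.
  assert (Hn : forall m i j, f (i + Z.of_nat m * Z.of_nat N)%Z j = f i j).
  { induction m; intros i j. - simpl. rewrite Z.add_0_r; reflexivity.
    - rewrite Nat2Z.inj_succ. replace (i + Z.succ (Z.of_nat m) * Z.of_nat N)%Z
        with ((i + Z.of_nat m * Z.of_nat N) + Z.of_nat N)%Z by ring. rewrite P; auto. }
  intros a i j. destruct (Z_le_gt_dec 0 a) as [Ha|Ha].
  - destruct (Z_of_nat_complete a Ha) as [m ->]. auto.
  - destruct (Z_of_nat_complete (- a) ltac:(lia)) as [m Hm].
    rewrite <- (Hn m (i + a * Z.of_nat N)%Z j). f_equal.
    replace a with (- Z.of_nat m)%Z by lia. ring.
Qed.
Lemma pery_int N f : pery N f -> forall b i j, f i (j + b * Z.of_nat N)%Z = f i j.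
Proof.
  intros P b i j. exact (perx_int N (fun x y => f i x) (fun x y => P i x) b j 0%Z).
Qed.

Lemma periodic_per2 N f : periodic N f -> per2 N f.
Proof.
  intro P; split; intros i j.
  - rewrite <- (P i j 1%Z 0%Z). f_equal; ring.
  - rewrite <- (P i j 0%Z 1%Z). f_equal; ring.
Qed.
Lemma per2_periodic N f : per2 N f -> periodic N f.
Proof.
  intros [Px Py] i j a b. rewrite (pery_int N _ Py b), (perx_int N _ Px a). reflexivity.
Qed.

Lemma box_ext N f g : (0 < N)%nat -> per2 N f -> per2 N g ->
  (forall i j, (1 <= i <= Z.of_nat N)%Z -> (1 <= j <= Z.of_nat N)%Z -> f i j = g i j) ->
  forall i j, f i j = g i j.
Proof.
  intros HN [Pfx Pfy] [Pgx Pgy] H i j.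
  assert (HNz : (0 < Z.of_nat N)%Z) by lia.
  pose proof (Z.div_mod (i - 1) (Z.of_nat N) ltac:(lia)) as Ei.
  pose proof (Z.div_mod (j - 1) (Z.of_nat N) ltac:(lia)) as Ej.
  pose proof (Z.mod_pos_bound (i - 1) (Z.of_nat N) HNz).
  pose proof (Z.mod_pos_bound (j - 1) (Z.of_nat N) HNz).
  set (qi := ((i - 1) / Z.of_nat N)%Z) in *. set (ri := ((i - 1) mod Z.of_nat N)%Z) in *.
  set (qj := ((j - 1) / Z.of_nat N)%Z) in *. set (rj := ((j - 1) mod Z.of_nat N)%Z) in *.
  replace i with ((ri + 1) + qi * Z.of_nat N)%Z by lia.
  replace j with ((rj + 1) + qj * Z.of_nat N)%Z by lia.
  rewrite (perx_int N f Pfx), (pery_int N f Pfy), (perx_int N g Pgx), (pery_int N g Pgy).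
  apply H; lia.
Qed.

Lemma sum2_const N c : sum2 N (fun _ _ => c) = INR N * (INR N * c).
Proof. unfold sum2. rewrite (sum1N_ext N _ (fun _ => INR N * c)) by (intro; apply sum1N_const). apply sum1N_const. Qed.

Definition Tg h N (g : grid) : grid := fun i j => - lap h g i j + sum2 N g.

Lemma Tg_lin h N a f g i j : Tg h N (fun x y => a * f x y + g x y) i j = a * Tg h N f i j + Tg h N g i j.
Proof.
  unfold Tg. rewrite sum2_plus, sum2_scal. unfold lap, dx, dy, Dx, Dy, Rdiv. ring.
Qed.

Lemma step_const (f : Z -> R) : (forall z, f (z + 1)%Z = f z) -> forall z, f z = f 0%Z.
Proof.
  intros H.
  assert (Hn : forall m, f (Z.of_nat m) = f 0%Z /\ f (- Z.of_nat m)%Z = f 0%Z).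
  { induction m; [split; reflexivity|]. destruct IHm as [A B]. rewrite Nat2Z.inj_succ. split.
    - unfold Z.succ; rewrite H; auto.
    - rewrite <- B, <- (H (- Z.succ (Z.of_nat m))%Z). f_equal; lia. }
  intro z. destruct (Z_le_gt_dec 0 z) as [Hz|Hz].
  - destruct (Z_of_nat_complete z Hz) as [m ->]. apply Hn.
  - destruct (Z_of_nat_complete (- z) ltac:(lia)) as [m Hm].
    replace z with (- Z.of_nat m)%Z by lia. apply Hn.
Qed.

Lemma sum2_zero N : sum2 N (fun _ _ => 0) = 0.
Proof. rewrite sum2_const; ring. Qed.

Lemma sum2_nonneg_zero N F : (forall i j, 0 <= F i j) -> sum2 N F = 0 ->
  forall i j, (1 <= i <= Z.of_nat N)%Z -> (1 <= j <= Z.of_nat N)%Z -> F i j = 0.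
Proof.
  intros H Hs i j Hi Hj.
  assert (Hin : forall i, 0 <= sum1N N (fun j => F i j)).
  { intro i'. replace 0 with (sum1N N (fun _ => 0)) by (rewrite sum1N_const; ring). apply sum1N_le; auto. }
  pose proof (sum1N_nonneg_zero N (fun i => sum1N N (fun j => F i j)) Hin Hs i Hi) as Hi'.
  exact (sum1N_nonneg_zero N (fun j => F i j) (H i) Hi' j Hj).
Qed.

Lemma Tg_inj h N g : h <> 0 -> (0 < N)%nat -> per2 N g -> (forall i j, Tg h N g i j = 0) ->
  forall i j, g i j = 0.
Proof.
  intros Hh HN Pg HT.
  assert (HNr : 0 < INR N) by (apply lt_0_INR; lia).
  assert (Hs : sum2 N (Tg h N g) = 0) by (rewrite (sum2_ext N _ (fun _ _ => 0)); [apply sum2_zero|auto]).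
  assert (HB1 : Bf h N g (gconst 1) = 0).
  { rewrite Bf_grad; auto; [|apply gconst_per]. rewrite <- (sum2_zero N). apply sum2_ext; intros.
    unfold Dx, Dy, gconst. field; auto. }
  assert (HS : sum2 N g = 0).
  { unfold Tg in Hs. rewrite sum2_plus, sum2_const in Hs.
    unfold Bf, gconst in HB1. rewrite (sum2_ext N _ (fun i j => - lap h g i j * 1)) in Hs by (intros; ring).
    rewrite HB1 in Hs. apply (Rmult_eq_reg_l (INR N * INR N)); [|nra]. lra. }
  assert (Hl : forall i j, - lap h g i j = 0) by (intros i j; specialize (HT i j); unfold Tg in HT; lra).
  assert (HBg : Bf h N g g = 0) by (unfold Bf; rewrite <- (sum2_zero N); apply sum2_ext; intros; rewrite Hl; ring).
  rewrite Bf_grad in HBg; auto.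
  assert (Hbox := sum2_nonneg_zero N (fun i j => Dx h g i j * Dx h g i j + Dy h g i j * Dy h g i j)
     ltac:(intros; nra) HBg).
  destruct Pg as [Px Py].
  assert (HDx : forall i j, Dx h g i j = 0).
  { apply (box_ext N (Dx h g) (gconst 0) HN); [split; [apply perx_Dx|apply pery_Dx]; auto|apply gconst_per|].
    intros i j Hi Hj. specialize (Hbox i j Hi Hj). unfold gconst. nra. }
  assert (HDy : forall i j, Dy h g i j = 0).
  { apply (box_ext N (Dy h g) (gconst 0) HN); [split; [apply perx_Dy|apply pery_Dy]; auto|apply gconst_per|].
    intros i j Hi Hj. specialize (Hbox i j Hi Hj). unfold gconst. nra. }
  assert (Hx : forall i j, g (i + 1)%Z j = g i j).
  { intros i j. specialize (HDx i j). unfold Dx in HDx.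
    apply Rminus_diag_uniq. apply (Rmult_eq_reg_r (/ h)); [|apply Rinv_neq_0_compat; auto].
    rewrite Rmult_0_l. exact HDx. }
  assert (Hy : forall i j, g i (j + 1)%Z = g i j).
  { intros i j. specialize (HDy i j). unfold Dy in HDy.
    apply Rminus_diag_uniq. apply (Rmult_eq_reg_r (/ h)); [|apply Rinv_neq_0_compat; auto].
    rewrite Rmult_0_l. exact HDy. }
  assert (Hc : forall i j, g i j = g 0%Z 0%Z).
  { intros i j. rewrite (step_const (fun y => g i y) (Hy i) j).
    exact (step_const (fun x => g x 0%Z) (fun z => Hx z 0%Z) i). }
  rewrite (sum2_ext N _ (fun _ _ => g 0%Z 0%Z)) in HS by auto.
  rewrite sum2_const in HS.
  intros i j. rewrite Hc. apply (Rmult_eq_reg_l (INR N * INR N)); [|nra]. lra.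
Qed.

Lemma per2_Tg h N g : per2 N g -> per2 N (Tg h N g).
Proof.
  intros [Px Py]; split; intros i j; unfold Tg.
  - rewrite (perx_lap N h g Px). reflexivity.
  - rewrite (pery_lap N h g Py). reflexivity.
Qed.

Lemma inner_eq h N f g : inner h N f g = h ^ 2 * sum2 N (fun i j => f i j * g i j).
Proof. reflexivity. Qed.

Lemma per2_gminus N f g : per2 N f -> per2 N g -> per2 N (gminus f g).
Proof. intros [fx fy] [gx gy]; split; intros i j; unfold gminus; [rewrite fx, gx|rewrite fy, gy]; reflexivity. Qed.
Lemma per2_u3 N f g : per2 N f -> per2 N g -> per2 N (u3 f g).
Proof. intros [fx fy] [gx gy]; split; intros i j; unfold u3; [rewrite fx, gx|rewrite fy, gy]; reflexivity. Qed.

Lemma Tk_eq h u i j : Tk h u i j = ax (Kx' h u) i j - 2 * dx h (Kx h u) i j + ay (Ky' h u) i j - 2 * dy h (Ky h u) i j.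
Proof. reflexivity. Qed.

Lemma per2_Tk N h u : per2 N u -> per2 N (Tk h u).
Proof.
  intros [Px Py].
  assert (A1 : perx N (Kx' h u)) by (intros i j; unfold Kx'; rewrite (perx_Ax N u Px), (perx_Dx N h u Px); reflexivity).
  assert (A2 : perx N (Kx h u)) by (intros i j; unfold Kx; rewrite (perx_Ax N u Px), (perx_Dx N h u Px); reflexivity).
  assert (A3 : perx N (Ky' h u)) by (intros i j; unfold Ky'; rewrite (perx_Ay N u Px), (perx_Dy N h u Px); reflexivity).
  assert (A4 : perx N (Ky h u)) by (intros i j; unfold Ky; rewrite (perx_Ay N u Px), (perx_Dy N h u Px); reflexivity).
  assert (B1 : pery N (Kx' h u)) by (intros i j; unfold Kx'; rewrite (pery_Ax N u Py), (pery_Dx N h u Py); reflexivity).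
  assert (B2 : pery N (Kx h u)) by (intros i j; unfold Kx; rewrite (pery_Ax N u Py), (pery_Dx N h u Py); reflexivity).
  assert (B3 : pery N (Ky' h u)) by (intros i j; unfold Ky'; rewrite (pery_Ay N u Py), (pery_Dy N h u Py); reflexivity).
  assert (B4 : pery N (Ky h u)) by (intros i j; unfold Ky; rewrite (pery_Ay N u Py), (pery_Dy N h u Py); reflexivity).
  split; intros i j; rewrite !Tk_eq.
  - rewrite (perx_ax N _ A1), (perx_dx N h _ A2), (perx_ay N _ A3), (perx_dy N h _ A4). reflexivity.
  - rewrite (pery_ax N _ B1), (pery_dx N h _ B2), (pery_ay N _ B3), (pery_dy N h _ B4). reflexivity.
Qed.

Lemma per2_mu1 L N M0 N0 e1 e2 e3 c12 c13 c23 dt A1 q1m q2m q1 q2 p1 p2 :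
  per2 N q1m -> per2 N q2m -> per2 N q1 -> per2 N q2 -> per2 N p1 -> per2 N p2 ->
  per2 N (mu1 L N M0 N0 e1 e2 e3 c12 c13 c23 dt A1 q1m q2m q1 q2 p1 p2).
Proof.
  intros Pa Pb Pc Pd Pe Pf.
  pose proof (per2_Tk N (L / INR N) _ Pe) as [T1x T1y].
  pose proof (per2_Tk N (L / INR N) _ (per2_u3 N _ _ Pe Pf)) as [T3x T3y].
  pose proof (per2_gminus N _ _ Pe Pc) as [Gx Gy].
  pose proof (perx_lap N (L / INR N) _ Gx) as Lx. pose proof (pery_lap N (L / INR N) _ Gy) as Ly.
  destruct Pa as [ax' ay']; destruct Pb as [bx by']; destruct Pc as [cx cy]; destruct Pd as [dx' dy'];
  destruct Pe as [ex ey]; destruct Pf as [fx fy].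
  split; intros i j; unfold mu1; cbv beta zeta.
  - rewrite T1x, T3x, Lx, ax', bx, cx, dx', ex, fx. reflexivity.
  - rewrite T1y, T3y, Ly, ay', by', cy, dy', ey, fy. reflexivity.
Qed.

Lemma per2_mu2 L N M0 N0 e1 e2 e3 c12 c13 c23 dt A2 q1m q2m q1 q2 p1 p2 :
  per2 N q1m -> per2 N q2m -> per2 N q1 -> per2 N q2 -> per2 N p1 -> per2 N p2 ->
  per2 N (mu2 L N M0 N0 e1 e2 e3 c12 c13 c23 dt A2 q1m q2m q1 q2 p1 p2).
Proof.
  intros Pa Pb Pc Pd Pe Pf.
  pose proof (per2_Tk N (L / INR N) _ Pf) as [T1x T1y].
  pose proof (per2_Tk N (L / INR N) _ (per2_u3 N _ _ Pe Pf)) as [T3x T3y].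
  pose proof (per2_gminus N _ _ Pf Pd) as [Gx Gy].
  pose proof (perx_lap N (L / INR N) _ Gx) as Lx. pose proof (pery_lap N (L / INR N) _ Gy) as Ly.
  destruct Pa as [ax' ay']; destruct Pb as [bx by']; destruct Pc as [cx cy]; destruct Pd as [dx' dy'];
  destruct Pe as [ex ey]; destruct Pf as [fx fy].
  split; intros i j; unfold mu2; cbv beta zeta.
  - rewrite T1x, T3x, Lx, ax', bx, cx, dx', ex, fx. reflexivity.
  - rewrite T1y, T3y, Ly, ay', by', cy, dy', ey, fy. reflexivity.
Qed.

Lemma Tg_sum h N g : h <> 0 -> per2 N g -> sum2 N (Tg h N g) = INR N * (INR N * sum2 N g).
Proof.
  intros Hh Pg.
  assert (HB1 : Bf h N g (gconst 1) = 0).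
  { rewrite Bf_grad; auto; [|apply gconst_per]. rewrite <- (sum2_zero N). apply sum2_ext; intros.
    unfold Dx, Dy, gconst. field; auto. }
  unfold Tg. rewrite sum2_plus, sum2_const.
  unfold Bf, gconst in HB1. rewrite (sum2_ext N _ (fun i j => - lap h g i j * 1)) by (intros; ring).
  rewrite HB1. ring.
Qed.

Lemma mean_sum L N f : 0 < L -> (0 < N)%nat -> mean L N f = sum2 N f / (INR N) ^ 2.
Proof.
  intros HL HN. assert (0 < INR N) by (apply lt_0_INR; lia).
  unfold mean. rewrite inner_eq. rewrite (sum2_ext N _ f) by (intros; unfold gconst; ring).
  field. split; lra.
Qed.
Lemma final_alg (h2 e1 e2 e3 dt c13 c23 c SHp SHb Gp1 Gb1 Gp2 Gb2 Gp3 Gb3 n1 n2 m1 m2 l1 l2 k1 k2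
  T Q W1 W2 W3 M1 M2 G1 G2 r1 r2 s12 s21 : R) :
  0 < h2 -> 0 < dt ->
  SHp - SHb <= T + Q ->
  Gp1 - Gb1 <= W1 -> Gp2 - Gb2 <= W2 -> Gp3 - Gb3 <= W3 ->
  M1 + M2 = T + e1 ^ 2 * W1 + e2 ^ 2 * W2 + e3 ^ 2 * W3
     + (2 * c13 ^ 2 + 1 / 2 * c ^ 2) * dt * G1 + (2 * c23 ^ 2 + 1 / 2 * c ^ 2) * dt * G2 ->
  M1 = - (1 / (2 * dt)) * (3 * n1 - r1) ->
  M2 = - (1 / (2 * dt)) * (3 * n2 - r2) ->
  Q + c13 * l1 + c23 * l2 - c13 * k1 - c23 * k2 <= 2 * c13 * l1 + 2 * c23 * l2 - c * s12 - c * s21 ->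
  2 * c13 * l1 <= 1 / (2 * dt) * n1 + c13 ^ 2 / (1 / (2 * dt)) * G1 ->
  2 * c23 * l2 <= 1 / (2 * dt) * n2 + c23 ^ 2 / (1 / (2 * dt)) * G2 ->
  2 * (- c / 2) * s12 <= 1 / (2 * dt) * m1 + (- c / 2) ^ 2 / (1 / (2 * dt)) * G2 ->
  2 * (- c / 2) * s21 <= 1 / (2 * dt) * m2 + (- c / 2) ^ 2 / (1 / (2 * dt)) * G1 ->
  2 * (1 / 2) * r1 <= 1 / 2 * m1 + (1 / 2) ^ 2 / (1 / 2) * n1 ->
  2 * (1 / 2) * r2 <= 1 / 2 * m2 + (1 / 2) ^ 2 / (1 / 2) * n2 ->
  h2 * (SHp) + e1 ^ 2 * (h2 * Gp1) + e2 ^ 2 * (h2 * Gp2) + e3 ^ 2 * (h2 * Gp3)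
   + 3 / (4 * dt) * (h2 * n1 + h2 * n2) + c13 * (h2 * l1) + c23 * (h2 * l2)
  <= h2 * (SHb) + e1 ^ 2 * (h2 * Gb1) + e2 ^ 2 * (h2 * Gb2) + e3 ^ 2 * (h2 * Gb3)
   + 3 / (4 * dt) * (h2 * m1 + h2 * m2) + c13 * (h2 * k1) + c23 * (h2 * k2).
Proof.
  intros Hh2 Hdt F1 F2 F3 F4 F5 F6 F7 F8 F9 F10 F11 F12 F13 F14.
  set (k := 1 / (2 * dt)).
  assert (Hk : 0 < k) by (unfold k; apply Rdiv_lt_0_compat; lra).
  replace (c13 ^ 2 / (1 / (2 * dt))) with (2 * dt * c13 ^ 2) in F9 by (field; lra).
  replace (c23 ^ 2 / (1 / (2 * dt))) with (2 * dt * c23 ^ 2) in F10 by (field; lra).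
  replace ((- c / 2) ^ 2 / (1 / (2 * dt))) with (dt * c ^ 2 / 2) in F11, F12 by (field; lra).
  replace ((1 / 2) ^ 2 / (1 / 2)) with (1/2) in F13, F14 by field.
  assert (E1 : e1 ^ 2 * (Gp1 - Gb1) <= e1 ^ 2 * W1) by (apply Rmult_le_compat_l; [nra|lra]).
  assert (E2 : e2 ^ 2 * (Gp2 - Gb2) <= e2 ^ 2 * W2) by (apply Rmult_le_compat_l; [nra|lra]).
  assert (E3 : e3 ^ 2 * (Gp3 - Gb3) <= e3 ^ 2 * W3) by (apply Rmult_le_compat_l; [nra|lra]).
  assert (R1 : k * r1 <= k * (1/2 * m1 + 1/2 * n1)) by (apply Rmult_le_compat_l; lra).
  assert (R2 : k * r2 <= k * (1/2 * m2 + 1/2 * n2)) by (apply Rmult_le_compat_l; lra).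
  assert (Ek : 3 / (4 * dt) = 3 / 2 * k) by (unfold k; field; lra).
  rewrite Ek.
  fold k in F6, F7, F9, F10, F11, F12.
  assert (X : SHp + e1 ^ 2 * Gp1 + e2 ^ 2 * Gp2 + e3 ^ 2 * Gp3 + 3 / 2 * k * (n1 + n2) + c13 * l1 + c23 * l2
     <= SHb + e1 ^ 2 * Gb1 + e2 ^ 2 * Gb2 + e3 ^ 2 * Gb3 + 3 / 2 * k * (m1 + m2) + c13 * k1 + c23 * k2).
  { nra. }
  nra.
Qed.

Lemma Bf_spec h N psi d g : (forall i j, - lap h psi i j = d i j) ->
  Bf h N psi g = sum2 N (fun i j => d i j * g i j).
Proof. intro H; unfold Bf; apply sum2_ext; intros; rewrite H; reflexivity. Qed.

Definition Qpt (c12 c13 c23 : R) (a1 a2 b1 b2 p1 p2 : grid) : grid := fun i j =>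
  2 * c13 * (b1 i j - a1 i j) * (p1 i j - b1 i j) - (c12 - c13 - c23) * (b2 i j - a2 i j) * (p1 i j - b1 i j)
      + 2 * c23 * (b2 i j - a2 i j) * (p2 i j - b2 i j) - (c12 - c13 - c23) * (b1 i j - a1 i j) * (p2 i j - b2 i j)
      - c13 * (p1 i j - b1 i j) ^ 2 - c23 * (p2 i j - b2 i j) ^ 2 + (c12 - c13 - c23) * (p1 i j - b1 i j) * (p2 i j - b2 i j).

From HB Require Import structures.
From mathcomp Require ssreflect ssrfun ssrbool eqtype ssrnat seq fintype ssralg matrix mxalgebra Rstruct.

Module LinAlg.
Import ssreflect ssrfun ssrbool eqtype ssrnat seq fintype ssralg matrix Rstruct.
Import GRing.Theory.
Local Open Scope ring_scope.

Section LinSurj.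
Variable n : nat.
Variable F : 'M[R]_(n, n) -> 'M[R]_(n, n).
Hypothesis Flin : forall (a : R) X Y, F (a *: X + Y) = a *: F X + F Y.
Hypothesis Finj : forall X, F X = 0 -> X = 0.

Let Flin' : GRing.linear_for *:%R F. Proof. move=> a X Y; exact: Flin. Qed.
HB.instance Definition _ := GRing.isLinear.Build R 'M[R]_(n, n) 'M[R]_(n, n) *:%R F Flin'.

Lemma lin_surj Y : exists X, F X = Y.
Proof.
  have Hu : lin_mx F \in unitmx.
  { rewrite unitmxE unitfE. apply/negP => /det0P [v nv0 Hv].
    move: (mul_rV_lin F v). rewrite Hv => H0.
    have : F (vec_mx v) = 0.
    { apply: (can_inj mxvecK). by rewrite -H0 linear0. }
    move/Finj => Hv0. move/eqP: nv0; apply. by rewrite -(vec_mxK v) Hv0 linear0. }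
  exists (vec_mx (mxvec Y *m invmx (lin_mx F))).
  apply: (can_inj mxvecK). by rewrite -mul_rV_lin mulmxKV.
Qed.
End LinSurj.

Section Bridge.
Variable m : nat.
Let N := m.+1.
Definition idx (z : Z) : 'I_N := inord (Z.to_nat ((z - 1) mod Z.of_nat N)).
Definition ofM (X : 'M[R]_(N, N)) : grid := fun i j => X (idx i) (idx j).
Definition toM (f : grid) : 'M[R]_(N, N) :=
  \matrix_(i, j) f (Z.of_nat (nat_of_ord i) + 1)%Z (Z.of_nat (nat_of_ord j) + 1)%Z.

Lemma idx_ord (i : 'I_N) : idx (Z.of_nat (nat_of_ord i) + 1)%Z = i.
Proof.
  rewrite /idx. have Hi := ltn_ord i.
  have -> : (Z.of_nat (nat_of_ord i) + 1 - 1)%Z = Z.of_nat (nat_of_ord i) by lia.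
  rewrite Z.mod_small; last by move/ssrnat.ltP: Hi; lia.
  by rewrite Nat2Z.id inord_val.
Qed.

Lemma toM_ofM X : toM (ofM X) = X.
Proof. apply/matrixP => i j; by rewrite /toM /ofM mxE !idx_ord. Qed.

Lemma ofM_per X : per2 N (ofM X).
Proof.
  split => i j; rewrite /ofM /idx.
  - have -> : (i + Z.of_nat N - 1)%Z = ((i - 1) + 1 * Z.of_nat N)%Z by lia.
    by rewrite Z_mod_plus_full.
  - have -> : (j + Z.of_nat N - 1)%Z = ((j - 1) + 1 * Z.of_nat N)%Z by lia.
    by rewrite Z_mod_plus_full.
Qed.

Lemma toM_eq f g : per2 N f -> per2 N g -> toM f = toM g -> forall i j, f i j = g i j.
Proof.
  move=> Pf Pg E. apply: (box_ext N f g) => //; first by rewrite /N; lia.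
  move=> i j Hi Hj.
  have Hi' : (Z.to_nat (i - 1) < N)%N by apply/ssrnat.ltP; lia.
  have Hj' : (Z.to_nat (j - 1) < N)%N by apply/ssrnat.ltP; lia.
  move/matrixP: E => /(_ (Ordinal Hi') (Ordinal Hj')). rewrite !mxE /=.
  have -> : (Z.of_nat (Z.to_nat (i - 1)) + 1)%Z = i by lia.
  by have -> : (Z.of_nat (Z.to_nat (j - 1)) + 1)%Z = j by lia.
Qed.

Lemma Tg_surj h nu : h <> 0%R -> per2 N nu -> exists g, per2 N g /\ forall i j, Tg h N g i j = nu i j.
Proof.
  move=> Hh Pnu.
  pose F := fun X => toM (Tg h N (ofM X)).
  have Flin : forall (a : R) X Y, F (a *: X + Y) = a *: F X + F Y.
  { move=> a X Y. apply/matrixP => i j. rewrite /F !mxE.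
    have -> : ofM (a *: X + Y) = (fun x y => Rmult a (ofM X x y) + ofM Y x y)%R.
    { apply: functional_extensionality => x; apply: functional_extensionality => y.
      by rewrite /ofM !mxE. }
    exact: Tg_lin. }
  have Finj : forall X, F X = 0 -> X = 0.
  { move=> X HX. rewrite -(toM_ofM X).
    have E : forall i j, ofM X i j = 0%R.
    { apply: (Tg_inj h N) => //; first by rewrite /N; lia. exact: ofM_per.
      apply: (toM_eq _ (gconst 0%R)); [exact: per2_Tg (ofM_per X) | exact: gconst_per |].
      change (F X = toM (gconst 0%R)). rewrite HX. apply/matrixP => i j; by rewrite !mxE. }
    apply/matrixP => i j; by rewrite !mxE E. }
  have [X HX] := @lin_surj _ F Flin Finj (toM nu).
  exists (ofM X); split; first exact: ofM_per.
  apply: toM_eq => //. exact: per2_Tg (ofM_per X).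
Qed.
End Bridge.
End LinAlg.


Lemma inv_lap_spec L N nu : 0 < L -> (0 < N)%nat -> per2 N nu -> sum2 N nu = 0 ->
  periodic N (inv_neg_lap L N nu) /\ mean L N (inv_neg_lap L N nu) = 0 /\
  forall i j, - lap (L / INR N) (inv_neg_lap L N nu) i j = nu i j.
Proof.
  intros HL HN Pnu Hs. unfold inv_neg_lap. apply epsilon_spec.
  assert (HNr : 0 < INR N) by (apply lt_0_INR; lia).
  assert (Hh : L / INR N <> 0) by (apply Rgt_not_eq, Rdiv_lt_0_compat; lra).
  destruct N as [|m]; [lia|].
  destruct (LinAlg.Tg_surj m (L / INR (Datatypes.S m)) nu Hh Pnu) as [g [Pg Hg]].
  exists g.
  assert (Hsg : sum2 (Datatypes.S m) g = 0).
  { pose proof (Tg_sum _ _ g Hh Pg) as E.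
    rewrite (sum2_ext _ _ nu Hg), Hs in E.
    apply (Rmult_eq_reg_l (INR (Datatypes.S m) * INR (Datatypes.S m))); [|nra]. lra. }
  split; [apply per2_periodic; auto|split].
  - rewrite mean_sum, Hsg; auto. unfold Rdiv; ring.
  - intros i j. rewrite <- (Hg i j). unfold Tg. rewrite Hsg. ring.
Qed.

Theorem mainTheorem3
  (L : R) (N : nat) (M0 N0 e1 e2 e3 c12 c13 c23 dt : R)
  (a1 a2 b1 b2 p1 p2 : grid)
  (HL : 0 < L) (HN : (0 < N)%nat) (HM0 : 0 < M0) (HN0 : 0 < N0)
  (He1 : 0 < e1) (He2 : 0 < e2) (He3 : 0 < e3)
  (Hc12 : 0 < c12) (Hc13 : 0 < c13) (Hc23 : 0 < c23)
  (Hchi : 4 * c13 * c23 - (c12 - c13 - c23) ^ 2 > 0)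
  (Hdt : 0 < dt)
  (Hg0 : in_gibbs N a1 a2) (Hg1 : in_gibbs N b1 b2) (Hg2 : in_gibbs N p1 p2)
  (Hm1a : mean L N a1 = mean L N b1) (Hm1b : mean L N b1 = mean L N p1)
  (Hm2a : mean L N a2 = mean L N b2) (Hm2b : mean L N b2 = mean L N p2)
  (Hsol : solves_bdf2 L N M0 N0 e1 e2 e3 c12 c13 c23 1 1 dt
            (2 * c13 ^ 2 + 1 / 2 * (c12 - c13 - c23) ^ 2)
            (2 * c23 ^ 2 + 1 / 2 * (c12 - c13 - c23) ^ 2)
            a1 a2 b1 b2 p1 p2) :
  Fh L N M0 N0 e1 e2 e3 c12 c13 c23 dt b1 b2 p1 p2
  <= Fh L N M0 N0 e1 e2 e3 c12 c13 c23 dt a1 a2 b1 b2.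
Proof.
  destruct Hg0 as [Pa1 [Pa2 Ga]]; destruct Hg1 as [Pb1 [Pb2 Gb]]; destruct Hg2 as [Pp1 [Pp2 Gp]].
  apply periodic_per2 in Pa1, Pa2, Pb1, Pb2, Pp1, Pp2.
  destruct Hsol as [_ [Hs1 Hs2]].
  assert (HNr : 0 < INR N) by (apply lt_0_INR; lia).
  assert (Hhp : 0 < L / INR N) by (apply Rdiv_lt_0_compat; lra).
  assert (Hh : L / INR N <> 0) by lra.
  rewrite !mean_sum in Hm1a, Hm1b, Hm2a, Hm2b by auto.
  assert (HN2 : 0 < INR N ^ 2) by (apply pow_lt; lra).
  assert (Sa1 : sum2 N a1 = sum2 N b1) by (apply (Rmult_eq_reg_r (/ INR N ^ 2)); [exact Hm1a|apply Rinv_neq_0_compat; lra]).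
  assert (Sb1 : sum2 N b1 = sum2 N p1) by (apply (Rmult_eq_reg_r (/ INR N ^ 2)); [exact Hm1b|apply Rinv_neq_0_compat; lra]).
  assert (Sa2 : sum2 N a2 = sum2 N b2) by (apply (Rmult_eq_reg_r (/ INR N ^ 2)); [exact Hm2a|apply Rinv_neq_0_compat; lra]).
  assert (Sb2 : sum2 N b2 = sum2 N p2) by (apply (Rmult_eq_reg_r (/ INR N ^ 2)); [exact Hm2b|apply Rinv_neq_0_compat; lra]).
  assert (Pd1 := per2_gminus N _ _ Pp1 Pb1). assert (Pd2 := per2_gminus N _ _ Pp2 Pb2).
  assert (Pf1 := per2_gminus N _ _ Pb1 Pa1). assert (Pf2 := per2_gminus N _ _ Pb2 Pa2).
  assert (Zd1 : sum2 N (gminus p1 b1) = 0) by (change (sum2 N (fun i j => p1 i j - b1 i j) = 0); rewrite sum2_minus; lra).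
  assert (Zd2 : sum2 N (gminus p2 b2) = 0) by (change (sum2 N (fun i j => p2 i j - b2 i j) = 0); rewrite sum2_minus; lra).
  assert (Zf1 : sum2 N (gminus b1 a1) = 0) by (change (sum2 N (fun i j => b1 i j - a1 i j) = 0); rewrite sum2_minus; lra).
  assert (Zf2 : sum2 N (gminus b2 a2) = 0) by (change (sum2 N (fun i j => b2 i j - a2 i j) = 0); rewrite sum2_minus; lra).
  destruct (inv_lap_spec L N _ HL HN Pd1 Zd1) as [Ppsi1 [_ Lpsi1]].
  destruct (inv_lap_spec L N _ HL HN Pd2 Zd2) as [Ppsi2 [_ Lpsi2]].
  destruct (inv_lap_spec L N _ HL HN Pf1 Zf1) as [Pphi1 [_ Lphi1]].
  destruct (inv_lap_spec L N _ HL HN Pf2 Zf2) as [Pphi2 [_ Lphi2]].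
  apply periodic_per2 in Ppsi1, Ppsi2, Pphi1, Pphi2.
  set (psi1 := inv_neg_lap L N (gminus p1 b1)) in *.
  set (psi2 := inv_neg_lap L N (gminus p2 b2)) in *.
  set (phi1 := inv_neg_lap L N (gminus b1 a1)) in *.
  set (phi2 := inv_neg_lap L N (gminus b2 a2)) in *.
  unfold Fh, Gh, neg1_sq, l2_sq. cbv beta zeta. rewrite !inner_eq.
  fold psi1 psi2 phi1 phi2.
  assert (Hchi' : forall x y, (c12 - c13 - c23) * x * y <= c13 * x ^ 2 + c23 * y ^ 2).
  { intros x y. assert (0 <= (2 * c13 * x - (c12 - c13 - c23) * y) ^ 2) by apply pow2_ge_0.
    assert (0 <= (4 * c13 * c23 - (c12 - c13 - c23) ^ 2) * y ^ 2) by (apply Rmult_le_pos; [lra|apply pow2_ge_0]).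
    nra. }
  apply (final_alg ((L / INR N) ^ 2) e1 e2 e3 dt c13 c23 (c12 - c13 - c23)
    _ _ _ _ _ _ _ _ _ _ _ _ _ _ _ _
    (sum2 N (fun i j => (dS_a M0 N0 (p1 i j) (p2 i j) + dH_a c12 c13 c23 (2 * b1 i j - a1 i j) (2 * b2 i j - a2 i j)) * (p1 i j - b1 i j)
       + (dS_b M0 N0 (p1 i j) (p2 i j) + dH_b c12 c13 c23 (2 * b1 i j - a1 i j) (2 * b2 i j - a2 i j)) * (p2 i j - b2 i j)))
    (sum2 N (Qpt c12 c13 c23 a1 a2 b1 b2 p1 p2))
    (sum2 N (fun i j => Tk (L / INR N) p1 i j * gminus p1 b1 i j))
    (sum2 N (fun i j => Tk (L / INR N) p2 i j * gminus p2 b2 i j))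
    (sum2 N (fun i j => Tk (L / INR N) (u3 p1 p2) i j * gminus (u3 p1 p2) (u3 b1 b2) i j))
    (sum2 N (fun i j => mu1 L N M0 N0 e1 e2 e3 c12 c13 c23 dt (2 * c13 ^ 2 + 1 / 2 * (c12 - c13 - c23) ^ 2)
                          a1 a2 b1 b2 p1 p2 i j * gminus p1 b1 i j))
    (sum2 N (fun i j => mu2 L N M0 N0 e1 e2 e3 c12 c13 c23 dt (2 * c23 ^ 2 + 1 / 2 * (c12 - c13 - c23) ^ 2)
                          a1 a2 b1 b2 p1 p2 i j * gminus p2 b2 i j))
    (Bf (L / INR N) N (gminus p1 b1) (gminus p1 b1))
    (Bf (L / INR N) N (gminus p2 b2) (gminus p2 b2))
    (sum2 N (fun i j => gminus b1 a1 i j * psi1 i j))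
    (sum2 N (fun i j => gminus b2 a2 i j * psi2 i j))
    (sum2 N (fun i j => gminus b1 a1 i j * gminus p2 b2 i j))
    (sum2 N (fun i j => gminus b2 a2 i j * gminus p1 b1 i j))).
  - apply pow_lt; lra.
  - exact Hdt.
  -
    rewrite <- sum2_minus, <- sum2_plus. apply sum2_le. intros i j. cbv beta.
    unfold gconst, Qpt. rewrite !Rmult_1_r.
    destruct (Gp i j) as [? [? ?]]; destruct (Gb i j) as [? [? ?]].
    apply SH_pt; auto.
  - apply grad_ineq; auto; intros i j; [apply (Gp i j)|apply (Gb i j)].
  - apply grad_ineq; auto; intros i j; [apply (Gp i j)|apply (Gb i j)].
  - apply grad_ineq; auto; try (apply per2_u3; auto); intros i j; unfold u3;
      [destruct (Gp i j) as [? [? ?]]|destruct (Gb i j) as [? [? ?]]]; lra.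
  -
    unfold Bf. rewrite <- !sum2_scal. repeat rewrite <- sum2_plus.
    apply sum2_ext; intros i j. cbv beta. unfold mu1, mu2, gminus, u3. cbv beta zeta. ring.
  -
    transitivity (Bf (L / INR N) N psi1 (mu1 L N M0 N0 e1 e2 e3 c12 c13 c23 dt (2 * c13 ^ 2 + 1 / 2 * (c12 - c13 - c23) ^ 2) a1 a2 b1 b2 p1 p2)).
    { unfold Bf; apply sum2_ext; intros i j; rewrite Lpsi1; ring. }
    rewrite Bf_sym; auto; [|apply per2_mu1; auto].
    unfold Bf.
    rewrite (sum2_ext N _ (fun i j => (- (1 / (2 * dt))) * (3 * (gminus p1 b1 i j * psi1 i j) - gminus b1 a1 i j * psi1 i j))).
    2:{ intros i j. pose proof (Hs1 i j) as E. rewrite Rmult_1_l in E. rewrite <- E. unfold gminus. field. lra. }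
    rewrite sum2_scal, sum2_minus, sum2_scal. reflexivity.
  -
    transitivity (Bf (L / INR N) N psi2 (mu2 L N M0 N0 e1 e2 e3 c12 c13 c23 dt (2 * c23 ^ 2 + 1 / 2 * (c12 - c13 - c23) ^ 2) a1 a2 b1 b2 p1 p2)).
    { unfold Bf; apply sum2_ext; intros i j; rewrite Lpsi2; ring. }
    rewrite Bf_sym; auto; [|apply per2_mu2; auto].
    unfold Bf.
    rewrite (sum2_ext N _ (fun i j => (- (1 / (2 * dt))) * (3 * (gminus p2 b2 i j * psi2 i j) - gminus b2 a2 i j * psi2 i j))).
    2:{ intros i j. pose proof (Hs2 i j) as E. rewrite Rmult_1_l in E. rewrite <- E. unfold gminus. field. lra. }
    rewrite sum2_scal, sum2_minus, sum2_scal. reflexivity.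
  -
    rewrite <- !sum2_scal. repeat (rewrite <- sum2_plus || rewrite <- sum2_minus).
    apply sum2_le; intros i j; cbv beta. unfold Qpt, gminus.
    pose proof (Hchi' (p1 i j - b1 i j) (p2 i j - b2 i j)).
    pose proof (pow2_ge_0 (b1 i j - a1 i j - (p1 i j - b1 i j))).
    pose proof (pow2_ge_0 (b2 i j - a2 i j - (p2 i j - b2 i j))).
    nra.
  - rewrite <- (Bf_spec _ N psi1 _ (gminus p1 b1) Lpsi1), <- (Bf_spec _ N psi1 _ psi1 Lpsi1).
    apply Bf_atom; auto. apply Rdiv_lt_0_compat; lra.
  - rewrite <- (Bf_spec _ N psi2 _ (gminus p2 b2) Lpsi2), <- (Bf_spec _ N psi2 _ psi2 Lpsi2).
    apply Bf_atom; auto. apply Rdiv_lt_0_compat; lra.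
  - rewrite <- (Bf_spec _ N phi1 _ (gminus p2 b2) Lphi1), <- (Bf_spec _ N phi1 _ phi1 Lphi1).
    apply Bf_atom; auto. apply Rdiv_lt_0_compat; lra.
  - rewrite <- (Bf_spec _ N phi2 _ (gminus p1 b1) Lphi2), <- (Bf_spec _ N phi2 _ phi2 Lphi2).
    apply Bf_atom; auto. apply Rdiv_lt_0_compat; lra.
  - rewrite <- (Bf_spec _ N phi1 _ psi1 Lphi1), <- (Bf_spec _ N phi1 _ phi1 Lphi1), <- (Bf_spec _ N psi1 _ psi1 Lpsi1).
    apply Bf_atom; auto; lra.
  - rewrite <- (Bf_spec _ N phi2 _ psi2 Lphi2), <- (Bf_spec _ N phi2 _ phi2 Lphi2), <- (Bf_spec _ N psi2 _ psi2 Lpsi2).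
    apply Bf_atom; auto; lra.
Qed.
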